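(* Let $X$ be a finite set with $N=|X|\ge 2$, $n=\binom N2$, and let $\mathcal{X}$ be a partition of $X$. Let $\Gamma$ be the set of all $t\in\mathcal{B}(K_N)$ whose coarse type is $\mathcal{X}$. Then $\Gamma$ is tropically convex: for all $s,t\in\Gamma$ and all $\lambda,\mu\in\mathbb{R}$, the coordinatewise maximum $\max\{s+\lambda\mathbb{1},\,t+\mu\mathbb{1}\}$ lies in $\Gamma$.
   Context: Coordinates of $\mathbb{R}^n$ are indexed by unordered pairs $\{a,b\}$ of distinct elements of $X$, written $t_{ab}$; $\mathbb{1}$ is the all-ones vector. The Bergman fan of the complete graphical matroid is $\mathcal{B}(K_N)=\{t\in\mathbb{R}^n : \text{for all pairwise distinct } a,b,c\in X, \text{ the maximum of } t_{ab},t_{ac},t_{bc} \text{ is attained at least twice}\}$; its elements correspond to equidistant phylogenetic trees with leaf set $X$ via $t_{ab}=$ path length between leaves $a,b$. The coarse type of $t\in\mathcal{B}(K_N)$ is the partition $\{X_i\}_{i\in I}$ of $X$ such that, with $M=\max_{a\neq b}t_{ab}$, two distinct elements $a,b$ lie in the same block iff $t_{ab}<M$; equivalently, $\max\{t_{ab}: a\ne b \text{ in a common block}\}<\min\{t_{ab}: a\in X_i,b\in X_j,i\neq j\}=\max\{t_{ab}: a\in X_i,b\in X_j,i\ne j\}$ (these are the leaf sets of the subtrees hanging at the children of the root). *)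

(* Defs.v *)
From mathcomp Require Import all_boot all_order all_algebra.
Set Implicit Arguments. Unset Strict Implicit. Unset Printing Implicit Defensive.
Import Order.TTheory GRing.Theory Num.Theory.
Local Open Scope ring_scope.

Definition upair (X : finType) := {A : {set X} | #|A| == 2%N}.

(* A point of R^n, n = binom N 2: a real vector indexed by unordered pairs. *)
Definition pvec (R : realFieldType) (X : finType) := upair X -> R.

(* The coordinate t_{ab}; only meaningful (and only used) for a != b. *)
Definition tc (R : realFieldType) (X : finType) (t : pvec R X) (a b : X) : R :=
  if (insub [set a; b] : option (upair X)) is Some p then t p else 0.

Definition in_bergman (R : realFieldType) (X : finType) (t : pvec R X) : Prop :=
  forall a b c : X, a != b -> a != c -> b != c ->
    let x := tc t a b in let y := tc t a c in let z := tc t b c in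
    let m := Num.max x (Num.max y z) in
    (2 <= (x == m) + (y == m) + (z == m))%N.

Definition is_max_coord (R : realFieldType) (X : finType) (t : pvec R X) (M : R) : Prop :=
  (exists p, t p = M) /\ (forall p, t p <= M).

Definition coarse_type_is (R : realFieldType) (X : finType) (t : pvec R X)
    (P : {set {set X}}) : Prop :=
  exists M, is_max_coord t M /\
    forall a b : X, a != b ->
      ([exists B in P, (a \in B) && (b \in B)] <-> tc t a b < M).

Definition Gamma (R : realFieldType) (X : finType) (P : {set {set X}}) (t : pvec R X) : Prop :=
  in_bergman t /\ coarse_type_is t P.

(* Main.v *)
Require Import Defs.
From mathcomp Require Import all_boot all_order all_algebra lra.
Import Order.TTheory GRing.Theory Num.Theory.
Local Open Scope ring_scope.

Lemma twice_iff (R : realFieldType) (x y z : R) :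
  let m := Num.max x (Num.max y z) in
  (2 <= (x == m) + (y == m) + (z == m))%N <->
  [/\ x <= Num.max y z, y <= Num.max x z & z <= Num.max x y].
Proof.
rewrite /=.
have E : forall a b c : R, (a == Num.max a (Num.max b c)) = (b <= a) && (c <= a).
  by move=> a b c; rewrite eq_le !le_max lexx /= !ge_max lexx.
rewrite E.
have -> : (y == Num.max x (Num.max y z)) = (x <= y) && (z <= y).
  by rewrite maxCA E.
have -> : (z == Num.max x (Num.max y z)) = (x <= z) && (y <= z).
  by rewrite (maxC y) maxCA E.
rewrite !le_max.
case: (ltgtP x y) => h1; case: (ltgtP y z) => h2; case: (ltgtP x z) => h3 => //=;
try (exfalso; lra); subst; rewrite ?lexx ?ltxx //=; split => //; case => //=.
Qed.

Lemma tcE (R : realFieldType) (X : finType) (a b : X) : a != b ->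
  exists p : upair X, forall t : pvec R X, tc t a b = t p.
Proof.
move=> ab; rewrite /tc; case: insubP => [p _ _|]; first by exists p.
by rewrite cards2 ab.
Qed.

Lemma comb (R : realFieldType) (x1 y1 z1 x2 y2 z2 l m : R) :
  x1 <= Num.max y1 z1 -> x2 <= Num.max y2 z2 ->
  Num.max (x1 + l) (x2 + m) <=
  Num.max (Num.max (y1 + l) (y2 + m)) (Num.max (z1 + l) (z2 + m)).
Proof.
move=> h1 h2; rewrite ge_max; move: h1 h2.
rewrite !le_max => /orP[] h1 /orP[] h2; by rewrite !lerD2r h1 h2 /= ?orbT.
Qed.

Theorem mainTheorem4 (R : realFieldType) (X : finType) (P : {set {set X}}) :
  (2 <= #|X|)%N -> partition P [set: X] ->
  forall (s t : pvec R X) (lam mu : R),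
    Gamma P s -> Gamma P t ->
    Gamma P (fun p => Num.max (s p + lam) (t p + mu)).
Proof.
move=> _ _ s t lam mu [Bs [Ms [[[ps eps] les] Cs]]] [Bt [Mt [[[pt ept] let_] Ct]]].
split.
  move=> a b c ab ac bc.
  have := Bs a b c ab ac bc; have := Bt a b c ab ac bc.
  case: (@tcE R X _ _ ab) => p1 e1; case: (@tcE R X _ _ ac) => p2 e2;
  case: (@tcE R X _ _ bc) => p3 e3.
  rewrite /= !e1 !e2 !e3 !twice_iff.
  case=> h1 h2 h3 [g1 g2 g3]; split; exact: comb.
exists (Num.max (Ms + lam) (Mt + mu)); split.
  split.
    case: (leP (Mt + mu) (Ms + lam)) => h.
      exists ps; rewrite eps; apply/max_idPl; apply: le_trans h; by rewrite lerD2r.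
    exists pt; rewrite ept; apply/max_idPr; apply: le_trans (ltW h); by rewrite lerD2r.
  by move=> p; rewrite ge_max !le_max !lerD2r les let_ /= ?orbT.
move=> a b ab; case: (@tcE R X _ _ ab) => p e; rewrite !e.
have hs := Cs a b ab; have ht := Ct a b ab; rewrite e in hs; rewrite e in ht.
split.
  move=> H; have h1 := proj1 hs H; have h2 := proj1 ht H.
  by rewrite gt_max !lt_max !ltrD2r h1 h2 /= ?orbT.
move=> H; apply/hs; case: (ltP (s p) Ms) => // h; exfalso.
have es : s p = Ms by apply/le_anti; rewrite les h.
have nt : ~ (t p < Mt) by move/ht/hs; rewrite ltNge h.
have et : t p = Mt by apply/le_anti; rewrite let_ /=; case: (leP Mt (t p)).
by move: H; rewrite es et ltxx.
Qed.
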